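(* Let $q\geq2$ and $0<\alpha<(q-1)/q$. A randomized $q$-SGKH algorithm which on every input of length $n$ has expected cost at most $\alpha n$ must read at least $$b\geq K_{1/q}(1-\alpha)\,n=(1-h_q(\alpha))\,n\log_2 q$$ bits of advice.
   Context: $q$-SGKH (string guessing with known history) is the repeated matrix game with the $q\times q$ cost matrix with $0$ on the diagonal and $1$ elsewhere: inputs $(n,x_1,\dots,x_n)$ with $x_i\in[q]$; in round $i$ the algorithm knows $n,x_1,\dots,x_{i-1}$ and guesses $y_i\in[q]$, paying $1$ if $y_i\neq x_i$ and $0$ otherwise; $n$ is the length. Advice is read from an infinite tape prepared by an oracle knowing the input; a randomized algorithm with advice is a probability distribution over deterministic algorithms with advice. $K_y(x)=x\log_2(x/y)+(1-x)\log_2((1-x)/(1-y))$, and $h_q(x)=x\log_q(q-1)-x\log_qx-(1-x)\log_q(1-x)$. *)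

(* Defs.v *)
From mathcomp Require Import all_boot all_order all_algebra.
From mathcomp Require Import all_classical all_reals all_analysis.
Set Implicit Arguments. Unset Strict Implicit. Unset Printing Implicit Defensive.
Import Order.TTheory GRing.Theory Num.Theory.
Local Open Scope ring_scope.

Definition advice := nat -> bool.

(* A deterministic q-SGKH algorithm with advice: given the length n, the
   advice tape, and the history x_1..x_{i-1}, it outputs the guess y_i. *)
Definition det_alg (q : nat) := nat -> advice -> seq 'I_q -> 'I_q.

Definition cost (q n : nat) (A : det_alg q) (x : n.-tuple 'I_q) (phi : advice)
  : nat :=
  \sum_(i < n) (A n phi (take i x) != tnth x i : nat).

Definition reads_at_most (q : nat) (b n : nat) (A : det_alg q) : Prop :=
  forall phi phi' : advice, (forall k, (k < b)%N -> phi k = phi' k) ->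
  forall h : seq 'I_q, (size h < n)%N -> A n phi h = A n phi' h.

Definition log2 {R : realType} (x : R) : R := ln x / ln 2.

Definition KL {R : realType} (y x : R) : R :=
  x * log2 (x / y) + (1 - x) * log2 ((1 - x) / (1 - y)).

Definition logb {R : realType} (b x : R) : R := ln x / ln b.

Definition hq {R : realType} (q : nat) (x : R) : R :=
  x * logb q%:R (q%:R - 1) - x * logb q%:R x - (1 - x) * logb q%:R (1 - x).

(* Main.v *)
Require Import Defs.
From mathcomp Require Import all_boot all_order all_algebra.
From mathcomp Require Import all_classical all_reals all_analysis.
From mathcomp Require Import ring lra.
Import Order.TTheory GRing.Theory Num.Theory.
Local Open Scope ring_scope.

Lemma tuple_sum_cons (R : realType) (T : finType) n (F : n.+1.-tuple T -> R) :
  \sum_x F x = \sum_z \sum_(x : n.-tuple T) F [tuple of z :: x].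
Proof.
rewrite pair_big /=.
rewrite (reindex (fun p : T * n.-tuple T => [tuple of p.1 :: p.2])) //=.
exists (fun t : n.+1.-tuple T => (thead t, [tuple of behead t])).
  by move=> [z x] _ /=; congr pair; apply: val_inj.
by move=> t _; rewrite [RHS]tuple_eta.
Qed.

Lemma core (R : realType) q (K : R) (f : 'I_q -> 'I_q -> R)
  (hf : forall y, \sum_z f y z = K) : forall n (g : seq 'I_q -> 'I_q),
  \sum_(x : n.-tuple 'I_q) \prod_(i < n) f (g (take i x)) (tnth x i) = K ^+ n.
Proof.
elim=> [|n IH] g.
  under eq_bigr do rewrite big_ord0.
  by rewrite sumr_const card_tuple expn0 expr0.
rewrite tuple_sum_cons exprS -{1}(hf (g [::])) mulr_suml.
apply: eq_bigr => z _.
rewrite -(IH (fun h => g (z :: h))) mulr_sumr.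
apply: eq_bigr => x _.
rewrite big_ord_recl /=.
congr (_ * _).
apply: eq_bigr => i _.
by rewrite !(tnth_nth z) /=.
Qed.

Lemma det_bound (R : realType) q n b (A : det_alg q)
  (oracle : n.-tuple 'I_q -> advice) (c : R) :
  reads_at_most b n A ->
  \sum_(x : n.-tuple 'I_q) expR (c * (cost A x (oracle x))%:R)
    <= 2%:R ^+ b * (1 + (q%:R - 1) * expR c) ^+ n.
Proof.
move=> hA.
pose wof (x : n.-tuple 'I_q) : {ffun 'I_b -> bool} := [ffun i : 'I_b => oracle x i].
pose phi (w : {ffun 'I_b -> bool}) : advice :=
  fun k => if insub k is Some i then w i else false.
pose f (y z : 'I_q) : R := if y != z then expR c else 1.
have hf : forall y, \sum_z f y z = 1 + (q%:R - 1) * expR c.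
  move=> y; rewrite (bigD1 y) //= /f eqxx /=; congr (_ + _).
  under eq_bigr => z hz do rewrite eq_sym hz.
  rewrite sumr_const cardC1 card_ord -[LHS]mulr_natr [RHS]mulrC; congr (_ * _).
  have hq : (1 <= q)%N by apply: leq_ltn_trans (leq0n _) (ltn_ord y).
  by rewrite -subn1 natrB.
have G : forall w, \sum_(x : n.-tuple 'I_q) expR (c * (cost A x (phi w))%:R)
   = (1 + (q%:R - 1) * expR c) ^+ n.
  move=> w; rewrite -(@core R q _ f hf n (A n (phi w))).
  apply: eq_bigr => x _.
  rewrite /cost natr_sum mulr_sumr expR_sum.
  apply: eq_bigr => i _; rewrite /f.
  by case: (_ != _); rewrite ?mulr1 ?mulr0 ?expR0.
rewrite (partition_big wof xpredT) //=.
apply: le_trans (_ : \sum_(w : {ffun 'I_b -> bool}) (1 + (q%:R - 1) * expR c) ^+ n <= _).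
  apply: ler_sum => w _.
  rewrite -(G w) [X in _ <= X](bigID (fun x => wof x == w)) /=.
  rewrite -[X in X <= _]addr0; apply: lerD; last by apply/sumr_ge0 => x _; exact/ltW/expR_gt0.
  rewrite le_eqVlt; apply/orP; left; apply/eqP; apply: eq_bigr => x /eqP hx.
  congr (expR (c * _%:R)); apply: eq_bigr => i _.
  congr (nat_of_bool (_ != _)).
  apply: hA; last by rewrite size_take size_tuple ltn_ord.
  move=> k hk; rewrite /phi insubT -hx /wof ffunE //.
rewrite sumr_const card_ffun card_bool card_ord.
by rewrite -natrX mulr_natl.
Qed.
Lemma kl_id (R : realType) (q : nat) (alpha : R) :
  (2 <= q)%N -> 0 < alpha -> alpha < 1 ->
  KL (q%:R^-1) (1 - alpha) =
   (ln (q%:R : R) + alpha * (ln alpha - ln (q%:R - 1) - ln (1 - alpha)) + ln (1 - alpha)) / ln 2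
  /\ KL (q%:R^-1) (1 - alpha) = (1 - hq q alpha) * log2 (q%:R : R).
Proof.
move=> q2 a0 a1.
have q1 : (1 : R) < q%:R by rewrite ltr1n.
have q0 : (0 : R) < q%:R by lra.
have qm : (0 : R) < q%:R - 1 by lra.
have b0 : (0 : R) < 1 - alpha by lra.
have L2 : (0 : R) < ln 2 by apply: ln_gt0; lra.
have Lq : (0 : R) < ln q%:R by apply: ln_gt0.
have e1 : (1 - alpha) / q%:R^-1 = (1 - alpha) * q%:R by rewrite invrK.
have e2 : (1 - (1 - alpha)) / (1 - q%:R^-1) = alpha / ((q%:R - 1) / q%:R).
  by congr (_ / _); [lra | field; lra].
have E : KL (q%:R^-1) (1 - alpha) =
   (ln (q%:R : R) + alpha * (ln alpha - ln (q%:R - 1) - ln (1 - alpha)) + ln (1 - alpha)) / ln 2.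
  rewrite /KL /log2 e1 e2 (@lnM R (1 - alpha) q%:R) ?posrE // (@ln_div R alpha) ?posrE ?divr_gt0 // (@ln_div R (q%:R - 1)) ?posrE //.
  have -> : 1 - (1 - alpha) = alpha by lra.
  field; lra.
split=> //; rewrite E /hq /logb /log2; field; lra.
Qed.

Lemma jensen_exp (R : realType) (J : finType) (p y : J -> R) :
  (forall j, 0 <= p j) -> \sum_j p j = 1 ->
  expR (\sum_j p j * y j) <= \sum_j p j * expR (y j).
Proof.
move=> p0 p1; set m := \sum_j p j * y j.
have : \sum_j p j * (expR m * (1 + (y j - m))) <= \sum_j p j * expR (y j).
  apply: ler_sum => j _; apply: ler_wpM2l => //.
  rewrite -[X in _ <= expR X](subrK m) expRD mulrC.
  apply: ler_wpM2r; [exact/ltW/expR_gt0 | exact: expR_ge1Dx].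
apply: le_trans.
have -> : \sum_j p j * (expR m * (1 + (y j - m))) =
   \sum_j (expR m * p j + expR m * (p j * y j) - expR m * m * p j).
  by apply: eq_bigr => j _; ring.
by rewrite sumrB big_split /= -!mulr_sumr p1 !mulr1 -/m addrK.
Qed.

Theorem theorem9 (R : realType) (q : nat) (alpha : R) (n b : nat)
    (J : finType) (p : J -> R) (A : J -> det_alg q)
    (oracle : n.-tuple 'I_q -> advice) :
  (2 <= q)%N -> 0 < alpha -> alpha < (q%:R - 1) / q%:R ->
  (forall j, 0 <= p j) -> \sum_j p j = 1 ->
  (forall j, 0 < p j -> reads_at_most b n (A j)) ->
  (forall x : n.-tuple 'I_q,
      \sum_j p j * (cost (A j) x (oracle x))%:R <= alpha * n%:R) ->
  KL (q%:R^-1) (1 - alpha) * n%:R <= b%:R /\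
  KL (q%:R^-1) (1 - alpha) = (1 - hq q alpha) * log2 (q%:R : R).
Proof.
move=> q2 a0 aq p0 p1 hA hc.
have q1 : (1 : R) < q%:R by rewrite ltr1n.
have q0 : (0 : R) < q%:R by lra.
have qm : (0 : R) < q%:R - 1 by lra.
have aq' : alpha * q%:R < q%:R - 1 by rewrite -ltr_pdivlMr.
have a1 : alpha < 1.
  apply: lt_le_trans aq _; rewrite ler_pdivrMr //; lra.
have b0 : (0 : R) < 1 - alpha by lra.
have L2 : (0 : R) < ln 2 by apply: ln_gt0; lra.
have [E1 E2] := @kl_id R q alpha q2 a0 a1.
split=> //.
set u := alpha / ((q%:R - 1) * (1 - alpha)).
have u0 : 0 < u by rewrite divr_gt0 // mulr_gt0.
have u1 : u < 1.
  by rewrite ltr_pdivrMr ?mulr_gt0 // mul1r; nra.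
set c := ln u.
have ec : expR c = u by apply/eqP; rewrite lnK_eq.
have c0 : c <= 0 by rewrite /c -ln1 ler_ln ?posrE //; apply: ltW.
set K := 1 + (q%:R - 1) * expR c.
have eK : K = (1 - alpha)^-1.
  rewrite /K ec /u; field; lra.
have main : (q ^ n)%:R * expR (c * (alpha * n%:R)) <= 2%:R ^+ b * K ^+ n.
  have S1 : forall x : n.-tuple 'I_q, expR (c * (alpha * n%:R)) <=
      \sum_j p j * expR (c * (cost (A j) x (oracle x))%:R).
    move=> x; apply: le_trans (@jensen_exp R J p _ p0 p1).
    rewrite ler_expR.
    under eq_bigr do rewrite mulrCA.
    rewrite -mulr_sumr; exact: ler_wnM2l.
  apply: le_trans (_ : \sum_(x : n.-tuple 'I_q)
      \sum_j p j * expR (c * (cost (A j) x (oracle x))%:R) <= _).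
    apply: le_trans (ler_sum _ (fun x _ => S1 x)).
    by rewrite sumr_const card_tuple card_ord mulr_natl.
  rewrite exchange_big /=.
  apply: le_trans (_ : \sum_j p j * (2%:R ^+ b * K ^+ n) <= _); last first.
    by rewrite -mulr_suml p1 mul1r.
  apply: ler_sum => j _; rewrite -mulr_sumr.
  have [pj0|pj0] := eqVneq (p j) 0; first by rewrite pj0 !mul0r.
  have pj : 0 < p j by rewrite lt0r pj0 p0.
  apply: ler_wpM2l => //; exact: (@det_bound R q n b (A j) oracle c (hA j pj)).
have K0 : 0 < K by rewrite eK invr_gt0.
have qn0 : (0 : R) < (q ^ n)%:R by rewrite ltr0n expn_gt0 (leq_trans _ q2).
have bn0 : (0 : R) < 2%:R ^+ b by rewrite exprn_gt0.
move: main; rewrite -ler_ln ?posrE ?mulr_gt0 ?exprn_gt0 ?expR_gt0 //.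
rewrite lnM ?posrE ?expR_gt0 // expRK.
rewrite lnM ?posrE ?exprn_gt0 // natrX !lnXn // eK lnV ?posrE //.
have ce : c = ln alpha - ln (q%:R - 1) - ln (1 - alpha).
  rewrite /c /u ln_div ?posrE ?mulr_gt0 // lnM ?posrE //; ring.
rewrite ce -[ln q%:R *+ n]mulr_natr -[(- ln (1 - alpha)) *+ n]mulr_natr -[ln 2 *+ b]mulr_natr => H.
rewrite E1 mulrAC ler_pdivrMr //.
move: H; set La := ln alpha; set Lq := ln (q%:R : R); set L1 := ln (q%:R - 1 : R);
  set Lb := ln (1 - alpha); set L := ln (2 : R); set N := (n%:R : R); set B := (b%:R : R).
move=> H; clear -H.
have -> : (Lq + alpha * (La - L1 - Lb) + Lb) * N =
   Lq * N + (La - L1 - Lb) * (alpha * N) + Lb * N by ring.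
have -> : B * L = L * B + - Lb * N + Lb * N by ring.
by rewrite lerD2r.
Qed.
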